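(* Let $X \subset \mathbb{Z}^n$ and let $(X,d,c_1)$ be a digital metric space that is $c_1$-connected, where $d$ is any $\ell_p$ metric on $\mathbb{Z}^n$ ($1 \le p \le \infty$). Let $f: X \to X$ be a digital contraction map. Then $f$ is a constant function.
   Context: For $p,q \in \mathbb{Z}^n$, $p \neq q$, and $1 \le u \le n$, $p$ and $q$ are $c_u$-adjacent if $|p_i - q_i| = 1$ for at most $u$ indices $i$ and $p_j = q_j$ for all other indices $j$. A digital metric space is a triple $(X,d,\kappa)$ with $X\subset\mathbb{Z}^n$, $\kappa$ an adjacency on $X$ and $d$ a metric on $X$. The $\ell_p$ metric is $d(x,y) = (\sum_{i=1}^n |x_i-y_i|^p)^{1/p}$ for $1 \le p<\infty$ and $d(x,y) = \max_i |x_i - y_i|$ for $p=\infty$. $X$ is $c_1$-connected if any two points are joined by a finite sequence of points of $X$ with consecutive points equal or $c_1$-adjacent. $f$ is a digital contraction map if there is $\alpha \in (0,1)$ with $d(f(x),f(y)) \le \alpha\, d(x,y)$ for all $x,y \in X$. *)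

(* Defs.v *)
From HB Require Import structures.
From mathcomp Require Import all_boot all_order all_algebra.
From mathcomp Require Import all_classical all_reals ereal exp.
Set Implicit Arguments. Unset Strict Implicit. Unset Printing Implicit Defensive.
Import Order.TTheory GRing.Theory Num.Theory.
Local Open Scope ring_scope.

Definition pt (n : nat) := {ffun 'I_n -> int}.

Definition c_adj (n u : nat) (p q : pt n) : bool :=
  [&& p != q,
      [forall i, (p i == q i) || (`|p i - q i| == 1)] &
      (#|[set i | p i != q i]| <= u)%N].

Definition c1_connected (n : nat) (X : pt n -> Prop) : Prop :=
  forall x y, X x -> X y ->
    exists s : seq (pt n),
      path (fun a b => (a == b) || c_adj 1 a b) x s /\ last x s = y /\
      (forall z, z \in s -> X z).

Definition lp_dist (R : realType) (n : nat) (p : \bar R) (x y : pt n) : R :=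
  match p with
  | EFin r => (\sum_(i < n) ((`|x i - y i|%:~R : R) `^ r)) `^ (r^-1)
  | +oo%E => \big[Num.max/0]_(i < n) (`|x i - y i|%:~R : R)
  | -oo%E => 0
  end.

Definition digital_contraction (R : realType) (n : nat) (d : pt n -> pt n -> R)
  (X : pt n -> Prop) (f : pt n -> pt n) : Prop :=
  exists alpha : R, 0 < alpha < 1 /\
    forall x y, X x -> X y -> d (f x) (f y) <= alpha * d x y.

(* Main.v *)
Require Import Defs.
From HB Require Import structures.
From mathcomp Require Import all_boot all_order all_algebra.
From mathcomp Require Import all_classical all_reals ereal exp.
Import Order.TTheory GRing.Theory Num.Theory.
Local Open Scope ring_scope.

Lemma adj_term (n : nat) (x y : pt n) i :
  c_adj 1 x y -> `|x i - y i| = ((x i != y i) : nat)%:R :> int.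
Proof.
case/and3P => _ /forallP /(_ i) H _.
case: eqP H => [->|_] /= H; first by rewrite subrr.
by apply/eqP.
Qed.

Lemma dist_le1 (R : realType) (n : nat) (p : \bar R) (x y : pt n) :
  (1%:E <= p)%E -> c_adj 1 x y -> lp_dist p x y <= 1.
Proof.
move=> hp hadj; case: p hp => [r||] //= hp.
- rewrite lee_fin in hp.
  have r0 : r != 0 by apply/eqP => r0; rewrite r0 ler10 in hp.
  have E : \sum_(i < n) ((`|x i - y i|%:~R : R) `^ r) =
           (#|[set i | x i != y i]|)%:R.
    transitivity (\sum_(i < n) (((x i != y i) : nat)%:R : R)).
      apply: eq_bigr => i _.
      rewrite adj_term //; case: (x i != y i) => /=.
        by rewrite powR1.
      by rewrite powR0.
    rewrite -natr_sum -sum1_card; congr (_ %:R); rewrite [RHS]big_mkcond /=.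
    by apply: eq_bigr => i _; rewrite inE; case: (x i != y i).
  rewrite E; case/and3P: hadj => _ _.
  case: #|_| => [|[|k]] // _.
    by rewrite powR0 // invr_eq0.
  by rewrite powR1.
- apply: bigmax_le => // i _.
  rewrite adj_term //; case: (x i != y i) => /=.
    by rewrite mulr1n.
  by rewrite mulr0n ler01.
Qed.

Lemma dist_ge1 (R : realType) (n : nat) (p : \bar R) (x y : pt n) :
  (1%:E <= p)%E -> x != y -> 1 <= lp_dist p x y.
Proof.
move=> hp hxy.
have [i hi] : exists i, x i != y i.
  apply/existsP; apply: contraNT hxy => /existsPn Hn.
  by apply/eqP/ffunP => i; apply/eqP/negPn/Hn.
have T1 : 1 <= (`|x i - y i|%:~R : R).
  by rewrite ler1z -gtz0_ge1 normr_gt0 subr_eq0.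
case: p hp => [r||] //= hp.
- rewrite lee_fin in hp.
  have S1 : 1 <= \sum_(j < n) ((`|x j - y j|%:~R : R) `^ r).
    rewrite (bigD1 i) //=.
    apply: le_trans (le_trans T1 (le1r_powR T1 hp)) _.
    by rewrite lerDl sumr_ge0 // => j _; rewrite powR_ge0.
  apply: (@le_trans _ _ (1 `^ r^-1)); first by rewrite powR1.
  apply: ge0_ler_powR => //.
  all: try by rewrite invr_ge0 (le_trans ler01 hp).
  all: try by rewrite nnegrE (le_trans ler01 S1).
  all: try by rewrite nnegrE ler01.
- apply: le_trans T1 _; exact: (le_bigmax _ (fun j => (`|x j - y j|%:~R : R)) i).
Qed.

Theorem mainTheorem4 (R : realType) (n : nat) (p : \bar R)
  (X : pt n -> Prop) (f : pt n -> pt n) :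
  (1%:E <= p)%E ->
  c1_connected X ->
  (forall x, X x -> X (f x)) ->
  digital_contraction (lp_dist p) X f ->
  exists c : pt n, forall x, X x -> f x = c.
Proof.
move=> hp hcon hXf [a [/andP [a0 a1] hc]].
have step : forall u v, X u -> X v -> (u == v) || c_adj 1 u v -> f u = f v.
  move=> u v Xu Xv /orP [/eqP -> //|huv].
  apply/eqP; apply: contraT => hne.
  have h1 := @dist_ge1 R n p _ _ hp hne.
  have h2 := hc u v Xu Xv.
  have h3 := @dist_le1 R n p _ _ hp huv.
  have : a * lp_dist p u v <= a by rewrite -{2}(mulr1 a) ler_wpM2l // ltW.
  move=> h4.
  have := le_trans h1 (le_trans h2 h4).
  by rewrite leNgt a1.
have [[x0 X0]|nX] := pselect (exists x, X x); last first.
  exists [ffun _ => 0] => x Xx; exfalso; apply: nX; by exists x.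
exists (f x0) => x Xx.
have [s [hpath [hlast hs]]] := hcon x0 x X0 Xx.
rewrite -hlast.
elim: s x0 X0 hpath hlast hs {Xx} => [|z s IH] x0 X0 //= /andP [e hpath] hlast hs.
have Xz : X z by apply: hs; rewrite inE eqxx.
rewrite (step x0 z X0 Xz e).
apply: IH => // w hw; apply: hs; by rewrite inE hw orbT.
Qed.
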